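(* Let $\Gamma>0$ and $B\in\mathbb{R}$. For $N\in\mathbb{N}_+$ let \[ H_N^{\mathrm{CW}}=-\frac{\Gamma}{2N}\sum_{x,y=1}^{N}\sigma_3(x)\sigma_3(y)-B\sum_{x=1}^{N}\sigma_1(x) \] acting on $\bigotimes_{i=1}^N\mathbb{C}^2$ (a $2^N\times2^N$ real symmetric matrix), and let $\bar H_N^{\mathrm{CW}}=H_N^{\mathrm{CW}}/N$. Then $\{\bar H_N^{\mathrm{CW}}\}_N$ is a zero-distributed GLT sequence; in particular, for every continuous compactly supported $F:\mathbb{R}\to\mathbb{C}$, \[ \lim_{N\to\infty}\frac{1}{2^N}\sum_{j=1}^{2^N}F\big(\lambda_j(\bar H_N^{\mathrm{CW}})\big)=F(0), \] and the same holds with singular values in place of eigenvalues.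
   Context: Pauli matrices: $\sigma_1=\begin{pmatrix}0&1\\1&0\end{pmatrix}$, $\sigma_3=\begin{pmatrix}1&0\\0&-1\end{pmatrix}$. $\sigma_i(x)$ denotes the operator on $\bigotimes_{k=1}^N\mathbb{C}^2$ acting as $\sigma_i$ on the $x$-th tensor factor and as the $2\times2$ identity on the others. A matrix-sequence $\{A_N\}_N$ (with $A_N$ of size $d_N\to\infty$) is zero-distributed if $\lim_{N}\frac{1}{d_N}\sum_jF(\sigma_j(A_N))=F(0)$ for all $F\in C_c(\mathbb{R})$; zero-distributed sequences are exactly the GLT sequences with GLT symbol $0$. *)

(* Defs.v *)
From mathcomp Require Import all_boot all_order all_algebra.
From mathcomp Require Import all_classical all_reals all_analysis.
Set Implicit Arguments. Unset Strict Implicit. Unset Printing Implicit Defensive.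
Import Order.TTheory GRing.Theory Num.Theory.
Import numFieldNormedType.Exports.
Local Open Scope ring_scope.

Section Defs.
Variable R : realType.

(* Basis index i : 'I_(2^N) of (C^2)^{(x) N}; tensor factor x <-> bit x of i
   (bit value 0 = first basis vector e_1, bit value 1 = e_2). *)
Definition qbit (x i : nat) : bool := odd (i %/ 2 ^ x).

Definition sigma3 (N x : nat) : 'M[R]_(2 ^ N) :=
  \matrix_(i, j) (if i == j then (if qbit x i then -1 else 1) else 0).

(* sigma_1 acting on factor x: flips bit x *)
Definition sigma1 (N x : nat) : 'M[R]_(2 ^ N) :=
  \matrix_(i, j) (if [forall k : 'I_N, (qbit k i == qbit k j) == (val k != x)]
                  then 1 else 0).

Definition H_CW (Gamma B : R) (N : nat) : 'M[R]_(2 ^ N) :=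
  - (Gamma / (2 * N%:R)) *: (\sum_(x < N) \sum_(y < N) (sigma3 N x *m sigma3 N y))
  - B *: (\sum_(x < N) sigma1 N x).

Definition Hbar_CW (Gamma B : R) (N : nat) : 'M[R]_(2 ^ N) :=
  (N%:R)^-1 *: H_CW Gamma B N.

Definition is_eigenvalue_list (n : nat) (A : 'M[R]_n) (s : seq R) : Prop :=
  char_poly A = \prod_(l <- s) ('X - l%:P).

Definition is_singular_value_list (n : nat) (A : 'M[R]_n) (s : seq R) : Prop :=
  all (fun l => 0 <= l) s /\
  is_eigenvalue_list (A^T *m A) (map (fun l => l ^+ 2) s).

Definition Cc (F : R -> R) : Prop :=
  continuous F /\ exists M : R, forall x : R, M < `|x| -> F x = 0.

End Defs.

(* Main.v *)
Require Import Defs.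
From mathcomp Require Import all_boot all_order all_algebra.
From mathcomp Require Import all_classical all_reals all_analysis.
From mathcomp Require Import complex.
From mathcomp Require Import ring lra.
Import Order.TTheory GRing.Theory Num.Theory.
Import numFieldNormedType.Exports.
Local Open Scope ring_scope.
Local Open Scope classical_set_scope.

Lemma cp_conj (F : fieldType) n (P B : 'M[F]_n) : P \in unitmx ->
  char_poly (invmx P *m B *m P) = char_poly B.
Proof.
move=> Pu.
have e1 : (map_mx polyC (invmx P)) *m (map_mx polyC P) = 1%:M.
  by rewrite -map_mxM mulVmx // map_mx1.
rewrite /char_poly.
have -> : char_poly_mx (invmx P *m B *m P) =
   (map_mx polyC (invmx P)) *m char_poly_mx B *m (map_mx polyC P).
  rewrite /char_poly_mx mulmxBr mulmxBl !map_mxM -!mulmxA.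
  by rewrite [in RHS]mulmxA scalar_mxC -mulmxA e1 mulmx1.
rewrite !det_mulmx mulrC mulrA (mulrC (\det (P ^ polyC)%sesqui)) -det_mulmx e1 det1 mul1r.
done.
Qed.

Section Sp.
Variable R : realType.
Local Notation C := (complex R).
Local Notation f := (real_complex R).

Lemma real_C (x : C) : x \is Num.real -> x = f (complex.Re x).
Proof.
case: x => a b; rewrite realE !lecE /=.
by case/orP => /andP[/eqP hb _]; [rewrite hb | rewrite -hb].
Qed.

Lemma f_real (x : R) : f x \is Num.real.
Proof.
rewrite realE; have := le_total 0 x.
by rewrite -(lecR 0 x) -(lecR x 0).
Qed.

Lemma sym_spec n (A : 'M[R]_n) : A^T = A -> exists r : seq R,
  [/\ size r = n, char_poly A = \prod_(l <- r) ('X - l%:P),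
      char_poly (A *m A) = \prod_(l <- r) ('X - (l ^+ 2)%:P)
    & \sum_(l <- r) l ^+ 2 = \tr (A *m A)].
Proof.
move=> AT.
set A' := map_mx f A.
have hA : A' \is hermsymmx.
  apply: realsym_hermsym.
    apply/is_hermitianmxP; rewrite expr0 scale1r.
    apply/matrixP => i j; rewrite !mxE.
    by rewrite -[in LHS]AT mxE.
  by apply/mxOverP => i j; rewrite mxE f_real.
have Ad := hermitian_spectral_diag_real hA.
have /orthomx_spectralP AE := hermitian_normalmx hA.
have Pu := spectral_unit A'.
move: AE Pu Ad.
set P := spectralmx A'; set d := spectral_diag A' => AE Pu Ad.
have hd i : d 0 i = f (complex.Re (d 0 i)).
  by apply: real_C; apply: (mxOverP Ad).
exists [seq complex.Re (d 0 i) | i <- enum 'I_n].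
have AAE : map_mx f (A *m A) = invmx P *m diag_mx (\row_j (d 0 j * d 0 j)) *m P.
  rewrite map_mxM -/A' AE -mulmx_diag !mulmxA.
  by rewrite -[_ *m P *m invmx P]mulmxA mulmxV // mulmx1.
split.
- by rewrite size_map size_enum_ord.
- apply: (map_poly_inj f).
  rewrite map_char_poly -/A' AE cp_conj // char_poly_trig ?diag_mx_is_trig //.
  rewrite rmorph_prod big_map big_enum /=.
  apply: eq_bigr => i _; rewrite mxE eqxx mulr1n hd.
  by rewrite rmorphB /= map_polyX map_polyC.
- apply: (map_poly_inj f).
  rewrite map_char_poly AAE cp_conj // char_poly_trig ?diag_mx_is_trig //.
  rewrite rmorph_prod big_map big_enum /=.
  apply: eq_bigr => i _; rewrite !mxE eqxx mulr1n hd.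
  by rewrite rmorphB /= map_polyX map_polyC /= rmorphXn expr2.
- apply: (fmorph_inj f).
  rewrite -trace_map_mx AAE mxtrace_mulC mulmxA mulmxV // mul1mx mxtrace_diag.
  rewrite rmorph_sum big_map big_enum /=.
  by apply: eq_bigr => i _; rewrite mxE hd rmorphXn expr2.
Qed.
End Sp.

Section Comb.
Variable R : realType.

Definition eps (b : bool) : R := if b then -1 else 1.
Definition sz (N i : nat) : R := \sum_(x < N) eps (qbit x i).

Lemma sum_double (g : nat -> R) m :
  \sum_(0 <= i < m.*2) g i = \sum_(0 <= i < m) (g i.*2 + g i.*2.+1).
Proof.
elim: m => [|m IH]; first by rewrite !big_geq.
by rewrite doubleS !big_nat_recr //= IH addrA.
Qed.

Lemma qbitS x i : qbit x.+1 i = qbit x i./2.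
Proof. by rewrite /qbit expnS divnMA divn2. Qed.

Lemma qbit0 i : qbit 0 i = odd i.
Proof. by rewrite /qbit expn0 divn1. Qed.

Lemma szS N i : sz N.+1 i = eps (odd i) + sz N i./2.
Proof.
rewrite /sz big_ord_recl qbit0; congr (_ + _).
by apply: eq_bigr => x _; rewrite /= /bump /= qbitS.
Qed.

Lemma sum_sz2 N : \sum_(i < 2 ^ N) (sz N i) ^+ 2 = (N * 2 ^ N)%:R.
Proof.
elim: N => [|N IH].
  by rewrite expn0 big_ord1 /sz big_ord0 expr0n mul0n.
rewrite -(big_mkord xpredT (fun i => sz N.+1 i ^+ 2)).
rewrite expnS mul2n sum_double.
have -> : \sum_(0 <= i < 2 ^ N) (sz N.+1 i.*2 ^+ 2 + sz N.+1 i.*2.+1 ^+ 2)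
   = \sum_(0 <= i < 2 ^ N) (2 * sz N i ^+ 2 + 2).
  apply: eq_bigr => i _; rewrite !szS /= odd_double uphalf_double doubleK /eps.
  by rewrite !sqrrD !sqrrN !expr1n; ring.
rewrite big_split /= -mulr_sumr (big_mkord xpredT (fun i => sz N i ^+ 2)) IH.
rewrite sumr_const_nat subn0 -mul2n mulSn mulnCA natrD !natrM; ring.
Qed.

Lemma bits_inj N i j : (i < 2 ^ N)%N -> (j < 2 ^ N)%N ->
  (forall k, (k < N)%N -> qbit k i = qbit k j) -> i = j.
Proof.
elim: N i j => [|N IH] i j.
  by rewrite expn0 !ltnS !leqn0 => /eqP -> /eqP ->.
move=> hi hj hb.
rewrite -(odd_double_half i) -(odd_double_half j).
have ho : odd i = odd j by rewrite -!qbit0 hb.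
have hh : i./2 = j./2.
  apply: IH; first by rewrite ltn_half_double -mul2n -expnS.
    by rewrite ltn_half_double -mul2n -expnS.
  by move=> k hk; rewrite -!qbitS hb.
by rewrite ho hh.
Qed.

Definition cnd N (x : nat) (i j : nat) :=
  [forall k : 'I_N, (qbit k i == qbit k j) == (val k != x)].

Lemma cnd_sym N x i j : cnd N x i j = cnd N x j i.
Proof. by apply: eq_forallb => k; rewrite [qbit _ i == _]eq_sym. Qed.

Lemma cnd_j N x (i j j' : 'I_(2 ^ N)) : cnd N x i j -> cnd N x i j' -> j = j'.
Proof.
move=> /forallP h1 /forallP h2; apply: val_inj; apply: (@bits_inj N) => [||k hk]; try exact: ltn_ord.
have := h1 (Ordinal hk); have := h2 (Ordinal hk) => /=.
by case: (qbit k i); case: (qbit k j); case: (qbit k j'); case: (k != x).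
Qed.

Lemma cnd_x N (x y : 'I_N) i j : cnd N x i j -> cnd N y i j -> x = y.
Proof.
move=> /forallP /(_ x) h1 /forallP /(_ x) h2; apply/eqP.
move: h1 h2; rewrite /= eqxx /=.
by case: (qbit x i == qbit x j) => //= _; rewrite eq_sym eqbF_neg negbK.
Qed.

Lemma sum01 (T : finType) (P : pred T) : {in P &, forall a b, a = b} ->
  \sum_(t : T) (if P t then 1 else 0 : R) <= 1.
Proof.
move=> h; rewrite -big_mkcond /= sumr_const.
have : (#|P| <= 1)%N by apply/card_le1_eqP => a b ha hb; exact: h.
by rewrite -(ler_nat R) => /le_trans; apply; rewrite mulr1n.
Qed.


Lemma sigma3E N x : sigma3 R N x = diag_mx (\row_i eps (qbit x i)).
Proof.
apply/matrixP => i j; rewrite !mxE.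
by case: eqP => [->|]; rewrite ?mulr1n ?mulr0n.
Qed.

Lemma S2E N : \sum_(x < N) \sum_(y < N) (sigma3 R N x *m sigma3 R N y)
  = diag_mx (\row_i sz N i ^+ 2).
Proof.
apply/matrixP => i j; rewrite summxE.
under eq_bigr do rewrite summxE.
rewrite mxE mxE.
have [<-|ne] := eqVneq i j.
  rewrite mulr1n expr2 /sz mulr_suml; apply: eq_bigr => x _.
  rewrite mulr_sumr; apply: eq_bigr => y _.
  by rewrite !sigma3E mulmx_diag !mxE eqxx mulr1n.
rewrite mulr0n big1 // => x _; rewrite big1 // => y _.
by rewrite !sigma3E mulmx_diag !mxE (negbTE ne) mulr0n.
Qed.

Definition Tm N (i j : nat) : R := \sum_(x < N) (if cnd N x i j then 1 else 0).

Lemma HE (Gamma B : R) N (i j : 'I_(2 ^ N)) : H_CW Gamma B N i j =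
  - (Gamma / (2 * N%:R)) * (sz N i ^+ 2 *+ (i == j)) - B * Tm N i j.
Proof.
by rewrite /H_CW S2E !mxE summxE; congr (_ - _ * _); apply: eq_bigr => x _; rewrite mxE.
Qed.


Lemma Tm_ge0 N i j : 0 <= Tm N i j.
Proof. by apply: sumr_ge0 => x _; case: ifP. Qed.

Lemma Tm_le1 N i j : Tm N i j <= 1.
Proof. by apply: sum01 => x y; exact: cnd_x. Qed.

Lemma Tm_sym N i j : Tm N i j = Tm N j i.
Proof. by apply: eq_bigr => x _; rewrite cnd_sym. Qed.

Lemma sumTm N : \sum_(i < 2 ^ N) \sum_(j < 2 ^ N) Tm N i j <= (N * 2 ^ N)%:R.
Proof.
have -> : (N * 2 ^ N)%:R = \sum_(i < 2 ^ N) (N%:R : R).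
  by rewrite sumr_const card_ord natrM mulr_natr.
apply: ler_sum => i _; rewrite /Tm exchange_big /=.
have -> : (N%:R : R) = \sum_(x < N) 1 by rewrite sumr_const card_ord.
apply: ler_sum => x _; apply: sum01 => j j'; exact: cnd_j.
Qed.

Lemma sz_le N i : sz N i ^+ 2 <= (N%:R) ^+ 2.
Proof.
have h : `|sz N i| <= N%:R.
  apply: le_trans (ler_norm_sum _ _ _) _.
  have -> : (N%:R : R) = \sum_(x < N) 1 by rewrite sumr_const card_ord.
  by apply: ler_sum => x _; rewrite /eps; case: ifP; rewrite ?normrN normr1.
move: h; rewrite ler_norml => /andP[h1 h2].
have h3 : 0 <= N%:R - sz N i by rewrite subr_ge0.
have h4 : 0 <= N%:R + sz N i by lra.
have := mulr_ge0 h3 h4; nra.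
Qed.


Lemma HbarE (Gamma B : R) N (i j : 'I_(2 ^ N)) :
  Hbar_CW Gamma B N i j = N%:R^-1 * H_CW Gamma B N i j.
Proof. by rewrite mxE. Qed.

Lemma H_sym (Gamma B : R) N : (H_CW Gamma B N)^T = H_CW Gamma B N.
Proof.
apply/matrixP => i j; rewrite mxE !HE Tm_sym.
have [->|ne] := eqVneq i j; first by [].
by rewrite !mulr0n.
Qed.

Lemma Hbar_sym (Gamma B : R) N : (Hbar_CW Gamma B N)^T = Hbar_CW Gamma B N.
Proof.
apply/matrixP => i j; rewrite mxE !HbarE; congr (_ * _).
by rewrite -{1}(H_sym Gamma B N) mxE.
Qed.

Lemma sumMn_eq (N : nat) (i : 'I_N) (x : R) : \sum_(j < N) (x *+ (i == j)) = x.
Proof.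
rewrite (bigD1 i) //= eqxx mulr1n big1 ?addr0 // => j.
by rewrite eq_sym => /negbTE ->.
Qed.

Lemma sumH2 (Gamma B : R) N : (0 < N)%N ->
  \sum_(i < 2 ^ N) \sum_(j < 2 ^ N) H_CW Gamma B N i j ^+ 2
  <= (Gamma ^+ 2 / 2 + 2 * B ^+ 2) * (N * 2 ^ N)%:R.
Proof.
move=> N0.
set c := Gamma / (2 * N%:R).
have p1 : forall i j : 'I_(2 ^ N), H_CW Gamma B N i j ^+ 2 <=
    2 * c ^+ 2 * (sz N i ^+ 2 ^+ 2 *+ (i == j)) + 2 * B ^+ 2 * Tm N i j.
  move=> i j; rewrite HE -/c.
  have t0 := Tm_ge0 N i j; have t1 := Tm_le1 N i j.
  have ha : (sz N i ^+ 2 *+ (i == j)) ^+ 2 = sz N i ^+ 2 ^+ 2 *+ (i == j).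
    by case: (i == j); rewrite ?mulr1n ?mulr0n ?expr0n.
  rewrite -ha.
  set a := sz N i ^+ 2 *+ (i == j); set t := Tm N i j.
  have hB : 0 <= B ^+ 2 * (t * (1 - t)).
    by apply: mulr_ge0; [exact: sqr_ge0 | apply: mulr_ge0; rewrite ?subr_ge0].
  have hs : 0 <= (c * a - B * t) ^+ 2 by exact: sqr_ge0.
  rewrite -subr_ge0.
  have -> : 2 * c ^+ 2 * a ^+ 2 + 2 * B ^+ 2 * t - (- c * a - B * t) ^+ 2
    = (c * a - B * t) ^+ 2 + 2 * (B ^+ 2 * (t * (1 - t))) by ring.
  by apply: addr_ge0 => //; apply: mulr_ge0.
have p2 : \sum_(i < 2 ^ N) \sum_(j < 2 ^ N) H_CW Gamma B N i j ^+ 2 <=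
    2 * c ^+ 2 * \sum_(i < 2 ^ N) sz N i ^+ 2 ^+ 2 +
    2 * B ^+ 2 * \sum_(i < 2 ^ N) \sum_(j < 2 ^ N) Tm N i j.
  rewrite !mulr_sumr -big_split /=; apply: ler_sum => i _.
  apply: le_trans (ler_sum _ (fun j _ => p1 i j)) _.
  by rewrite big_split /= -!mulr_sumr sumMn_eq.
have p3 : \sum_(i < 2 ^ N) sz N i ^+ 2 ^+ 2 <= N%:R ^+ 2 * (N * 2 ^ N)%:R.
  rewrite -sum_sz2 mulr_sumr; apply: ler_sum => i _.
  by rewrite [X in X <= _]expr2 ler_wpM2r ?sqr_ge0 ?sz_le.
have c0 : 0 <= 2 * c ^+ 2 by rewrite mulr_ge0 ?sqr_ge0.
have b0 : 0 <= 2 * B ^+ 2 by rewrite mulr_ge0 ?sqr_ge0.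
apply: le_trans p2 _.
apply: le_trans (lerD (ler_wpM2l c0 p3) (ler_wpM2l b0 (sumTm N))) _.
have Nn0 : (N%:R : R) != 0 by rewrite pnatr_eq0 -lt0n.
rewrite /c le_eqVlt; apply/orP; left; apply/eqP.
rewrite natrM; field; exact: Nn0.
Qed.


Lemma tr_bound (Gamma B : R) N : (0 < N)%N ->
  \tr (Hbar_CW Gamma B N *m Hbar_CW Gamma B N)
  <= (Gamma ^+ 2 / 2 + 2 * B ^+ 2) * (2 ^ N)%:R / N%:R.
Proof.
move=> N0.
have -> : \tr (Hbar_CW Gamma B N *m Hbar_CW Gamma B N) =
   N%:R^-1 ^+ 2 * \sum_(i < 2 ^ N) \sum_(j < 2 ^ N) H_CW Gamma B N i j ^+ 2.
  rewrite /mxtrace mulr_sumr; apply: eq_bigr => i _.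
  rewrite mxE mulr_sumr; apply: eq_bigr => j _.
  have hs : H_CW Gamma B N j i = H_CW Gamma B N i j.
    by rewrite -{1}(H_sym Gamma B N) mxE.
  by rewrite !HbarE hs; ring.
have h0 : 0 <= N%:R^-1 ^+ 2 :> R by exact: sqr_ge0.
apply: le_trans (ler_wpM2l h0 (@sumH2 Gamma B N N0)) _.
have Nn0 : (N%:R : R) != 0 by rewrite pnatr_eq0 -lt0n.
rewrite le_eqVlt; apply/orP; left; apply/eqP.
rewrite natrM; field; exact: Nn0.
Qed.

End Comb.

Section An.
Variable R : realType.

Lemma Cc_bounded (F : R -> R) : Cc F -> exists Mb : R, 0 <= Mb /\ forall x, `|F x| <= Mb.
Proof.
move=> [Fc [M FM]].
have hM : - `|M| <= `|M| by rewrite -subr_ge0 opprK; apply: addr_ge0.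
have [c1 _ h1] := EVT_max hM (continuous_subspaceT Fc).
have [c2 _ h2] := EVT_min hM (continuous_subspaceT Fc).
exists (`|F c1| + `|F c2|); split; first by apply: addr_ge0.
move=> x.
have [hx|hx] := leP `|x| `|M|.
  have xin : x \in `[- `|M|, `|M|]%R.
    by rewrite in_itv /= -ler_norml.
  have := h1 x xin; have := h2 x xin.
  rewrite ler_norml => a b; apply/andP; split.
    have := ler_norm (- F c2); rewrite normrN.
    have := normr_ge0 (F c1); lra.
  have := ler_norm (F c1); have := normr_ge0 (F c2); lra.
rewrite FM ?normr0; first by apply: addr_ge0.
by apply: le_lt_trans hx; apply: ler_norm.
Qed.

Lemma zero_dist (s : nat -> seq R) (K : R) (F : R -> R) : Cc F ->
  (forall N, (0 < N)%N -> size (s N) = (2 ^ N)%N /\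
      \sum_(l <- s N) l ^+ 2 <= K * (2 ^ N)%:R / N%:R) ->
  (fun N : nat => (2 ^ N)%:R^-1 * \sum_(l <- s N) F l) @ \oo --> F 0.
Proof.
move=> FC hs.
have [Mb [Mb0 FMb]] := @Cc_bounded F FC.
case: FC => Fc _.
apply/cvgrPdist_lt => e e0.
have e20 : 0 < e / 2 by rewrite divr_gt0.
have := Fc 0; move/cvgrPdist_lt => /(_ _ e20) /nbhs_normP [d d0 Hd].
have Hd' : forall x, `|x| < d -> `|F x - F 0| < e / 2.
  by move=> x hx; rewrite distrC; apply: Hd => /=; rewrite sub0r normrN.
have {}d0 : 0 < d := d0.
set Q := 2 * Mb / d ^+ 2.
have Q0 : 0 <= Q.
  by apply: divr_ge0; [apply: mulr_ge0 => //; lra | exact: sqr_ge0].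
have pw : forall l, `|F l - F 0| <= e / 2 + Q * l ^+ 2.
  move=> l; have [hl|hl] := ltP `|l| d.
    apply: le_trans (ltW (Hd' l hl)) _.
    by rewrite lerDl mulr_ge0 ?sqr_ge0.
  apply: le_trans (ler_normB _ _) _.
  have h1 : `|F l| + `|F 0| <= Q * l ^+ 2.
    have hd2 : d ^+ 2 <= l ^+ 2.
      by rewrite -(real_normK (num_real l)) !expr2; apply: ler_pM => //; exact: ltW.
    have dd : 0 < d ^+ 2 by rewrite exprn_gt0.
    apply: le_trans (_ : _ <= Q * d ^+ 2) _; last by rewrite ler_wpM2l.
    rewrite /Q divfK ?gt_eqF //; have := FMb l; have := FMb 0; lra.
  by apply: le_trans h1 _; rewrite lerDr ltW.
have [N0 hN0] : exists N0 : nat, forall N, (N0 <= N)%N -> Q * K / N%:R < e / 2.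
  set z := `|Q * K| / (e / 2).
  have z0 : 0 <= z by apply: divr_ge0; [exact: normr_ge0 | exact: ltW].
  exists (Num.Def.archi_bound z).+1 => N hN.
  have zN : z < N%:R.
    apply: lt_le_trans (archi_boundP z0) _.
    by rewrite ler_nat; apply: leq_trans hN.
  have Npos : 0 < (N%:R : R) by exact: le_lt_trans z0 zN.
  rewrite ltr_pdivrMr //.
  apply: le_lt_trans (ler_norm _) _.
  by rewrite -ltr_pdivrMl // mulrC.
exists N0.+1 => // N /= hN.
have N0p : (0 < N)%N by apply: leq_trans hN.
have [sz hsum] := hs N N0p.
have tpos : 0 < ((2 ^ N)%:R : R) by rewrite ltr0n expn_gt0.
have -> : F 0 = (2 ^ N)%:R^-1 * \sum_(l <- s N) F 0.
  by rewrite big_const_seq count_predT sz iter_addr addr0 -[F 0 *+ _]mulr_natr mulrCA mulVf ?mulr1 // gt_eqF.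
rewrite -mulrBr -sumrB normrM ger0_norm ?invr_ge0 ?ltW //.
apply: (@le_lt_trans _ _ ((2 ^ N)%:R^-1 * \sum_(l <- s N) (e / 2 + Q * l ^+ 2))).

  apply: ler_wpM2l; first by rewrite invr_ge0 ltW.
  apply: le_trans (ler_norm_sum _ _ _) _.
  by apply: ler_sum => l _; rewrite distrC pw.
rewrite big_split /=.
have E1 : \sum_(l <- s N) (e / 2) = e / 2 * (2 ^ N)%:R.
  by rewrite big_const_seq count_predT sz iter_addr addr0 mulr_natr.
have E2 : \sum_(l <- s N) Q * l ^+ 2 = Q * \sum_(l <- s N) l ^+ 2.
  by rewrite mulr_sumr.
rewrite E1 E2.
set S := \sum_(l <- s N) l ^+ 2.
set T := ((2 ^ N)%:R : R).
have Tn0 : T != 0 by rewrite gt_eqF.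
have -> : T^-1 * (e / 2 * T + Q * S) = e / 2 + Q * S / T by field.
have hQ : Q * S <= Q * (K * T / N%:R) by rewrite ler_wpM2l.
have hQ' : Q * S / T <= Q * K / N%:R.
  have Nn0 : (N%:R : R) != 0 by rewrite pnatr_eq0 -lt0n.
  have -> : Q * K / N%:R = Q * (K * T / N%:R) / T.
    by field; rewrite Nn0 andbT.
  by apply: ler_wpM2r => //; rewrite invr_ge0 ltW.
have := hN0 N (ltnW hN); lra.
Qed.
End An.

Theorem mainTheorem5 (R : realType) (Gamma B : R) (hGamma : 0 < Gamma) :
  (* eigenvalue lists and singular value lists exist for every N >= 1 *)
  (forall N : nat, (0 < N)%N ->
     (exists s : seq R, size s = (2 ^ N)%N /\ is_eigenvalue_list (Hbar_CW Gamma B N) s) /\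
     (exists s : seq R, size s = (2 ^ N)%N /\ is_singular_value_list (Hbar_CW Gamma B N) s)) /\
  (* zero-distribution in the eigenvalue sense *)
  (forall (lam : nat -> seq R) (F : R -> R),
     (forall N : nat, (0 < N)%N -> is_eigenvalue_list (Hbar_CW Gamma B N) (lam N)) ->
     Cc F ->
     (fun N : nat => (2 ^ N)%:R^-1 * \sum_(l <- lam N) F l) @ \oo --> F 0) /\
  (* zero-distribution in the singular value sense *)
  (forall (sv : nat -> seq R) (F : R -> R),
     (forall N : nat, (0 < N)%N -> is_singular_value_list (Hbar_CW Gamma B N) (sv N)) ->
     Cc F ->
     (fun N : nat => (2 ^ N)%:R^-1 * \sum_(l <- sv N) F l) @ \oo --> F 0).

Proof.
set K := Gamma ^+ 2 / 2 + 2 * B ^+ 2.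
have key : forall N, (0 < N)%N -> exists r : seq R,
   [/\ size r = (2 ^ N)%N,
    char_poly (Hbar_CW Gamma B N) = \prod_(l <- r) ('X - l%:P),
    char_poly (Hbar_CW Gamma B N *m Hbar_CW Gamma B N)
      = \prod_(l <- map (fun l => l ^+ 2) r) ('X - l%:P)
   & \sum_(l <- r) l ^+ 2 <= K * (2 ^ N)%:R / N%:R].
  move=> N N0; have [r [h1 h2 h3 h4]] := @sym_spec R _ _ (Hbar_sym R Gamma B N).
  exists r; split => //; first by rewrite big_map.
  by rewrite h4; exact: tr_bound.
split; [|split].
- move=> N N0; have [r [h1 h2 h3 h4]] := key N N0; split.
    by exists r.
  exists (map (fun l => `|l|) r); split; first by rewrite size_map.
  split.
    by apply/allP => l /mapP [x _ ->]; exact: normr_ge0.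
  rewrite /is_eigenvalue_list Hbar_sym h3 !big_map.
  by apply: eq_bigr => l _; rewrite real_normK ?num_real.
- move=> lam F hl FC; apply: (@zero_dist R lam K F FC) => N N0.
  have [r [h1 h2 h3 h4]] := key N N0.
  have hp : perm_eq (lam N) r := prod_XsubC_eq (etrans (esym (hl N N0)) h2).
  by rewrite (perm_size hp) (perm_big _ hp).
- move=> sv F hsv FC; apply: (@zero_dist R sv K F FC) => N N0.
  have [r [h1 h2 h3 h4]] := key N N0.
  have [_ hs] := hsv N N0.
  move: hs; rewrite /is_eigenvalue_list Hbar_sym h3 => /esym /prod_XsubC_eq hp.
  split.
    by rewrite -(size_map (fun l => l ^+ 2)) (perm_size hp) size_map.
  by rewrite -(big_map (fun l => l ^+ 2) xpredT (fun l => l)) (perm_big _ hp) big_map.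
Qed.
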